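(* Let $Y,Z$ be finite-dimensional real or complex vector spaces, $f$ a vector field on $Y$, $F\colon Y\to Z$ quadratic, and $g,\gamma$ vector fields on $Z$ with $F'(y)f(y)=g(F(y))$ and $F''(f(y),f(y))=\gamma(F(y))$ for all $y\in Y$. Let nonzero $b_1,\dots,b_s$ and $h>0$ be given, and let $z_0,z_1,Z_1,\dots,Z_s\in Z$ satisfy \[ Z_i = z_0 + h\sum_{j=1}^{i-1} b_j g(Z_j) + \frac h2 b_i g(Z_i) - \frac{h^2}{8} b_i^2\gamma(Z_i)\ (i=1,\dots,s),\qquad z_1 = z_0 + h\sum_{i=1}^s b_i g(Z_i). \] If $G$ is a quadratic map on $Z$ (into some finite-dimensional vector space), then \[ G(z_1) = G(z_0) + h\sum_{i=1}^s b_i G'(Z_i)g(Z_i) + \frac{h^3}{8}\sum_{i=1}^s b_i^3 G''\bigl(g(Z_i),\gamma(Z_i)\bigr). \]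
   Context: A map $F$ on a vector space is quadratic if for every base point $y_0$, $F(y)=F(y_0)+F'(y_0)(y-y_0)+\tfrac12F''(y-y_0,y-y_0)$ for all $y$, with $F''$ a constant symmetric bilinear map. *)

(* Defs.v *)
From HB Require Import structures.
From mathcomp Require Import all_boot all_order all_algebra.
Set Implicit Arguments. Unset Strict Implicit. Unset Printing Implicit Defensive.
Import Order.TTheory GRing.Theory Num.Theory.
Local Open Scope ring_scope.

(* F : Y -> Z is quadratic with first derivative DF (DF y0 is the linear map
   F'(y0)) and constant symmetric bilinear second derivative D2F (= F''):
   F y = F y0 + F'(y0)(y - y0) + 1/2 F''(y - y0, y - y0) for all y0, y. *)
Definition is_quadratic (K : numFieldType) (Y Z : lmodType K)
    (F : Y -> Z) (DF : Y -> Y -> Z) (D2F : Y -> Y -> Z) : Prop :=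
  [/\ (forall y0 (a : K) u v, DF y0 (a *: u + v) = a *: DF y0 u + DF y0 v),
      (forall (a : K) u v w, D2F (a *: u + v) w = a *: D2F u w + D2F v w),
      (forall u v, D2F u v = D2F v u) &
      (forall y0 y, F y = F y0 + DF y0 (y - y0) + 2^-1 *: D2F (y - y0) (y - y0))].

(* Main.v *)
Require Import Defs.
From HB Require Import structures.
From mathcomp Require Import all_boot all_order all_algebra.
From mathcomp Require Import ring.
Import Order.TTheory GRing.Theory Num.Theory.
Local Open Scope ring_scope.

Section Quad.
Variables (K : numFieldType) (Z W : lmodType K) (G : Z -> W) (DG D2G : Z -> Z -> W).
Hypothesis HG : is_quadratic G DG D2G.
Let HG' : [/\ (forall y0 (a : K) u v, DG y0 (a *: u + v) = a *: DG y0 u + DG y0 v),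
      (forall (a : K) u v w, D2G (a *: u + v) w = a *: D2G u w + D2G v w),
      (forall u v, D2G u v = D2G v u) &
      (forall y0 y, G y = G y0 + DG y0 (y - y0) + 2^-1 *: D2G (y - y0) (y - y0))] := HG.

Lemma D2G_addl u v w : D2G (u + v) w = D2G u w + D2G v w.
Proof. have [A1 A2 A3 A4] := HG'; move: A1 A2 A3 A4 => _ L _ _; by rewrite -[u]scale1r L !scale1r. Qed.
Lemma D2G_0l w : D2G 0 w = 0.
Proof. have E := D2G_addl 0 0 w; rewrite addr0 in E. by apply: (addrI (D2G 0 w)); rewrite addr0 -E. Qed.
Lemma D2G_scalel a u w : D2G (a *: u) w = a *: D2G u w.
Proof. have [A1 A2 A3 A4] := HG'; move: A1 A2 A3 A4 => _ L _ _; by rewrite -[a *: u]addr0 L D2G_0l addr0. Qed.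
Lemma D2G_sym u v : D2G u v = D2G v u.
Proof. by case: HG. Qed.
Lemma D2G_addr u v w : D2G w (u + v) = D2G w u + D2G w v.
Proof. by rewrite D2G_sym D2G_addl !(D2G_sym _ w). Qed.
Lemma D2G_scaler a u w : D2G w (a *: u) = a *: D2G w u.
Proof. by rewrite D2G_sym D2G_scalel D2G_sym. Qed.
Lemma D2G_subl u v w : D2G (u - v) w = D2G u w - D2G v w.
Proof. by rewrite -scaleN1r D2G_addl D2G_scalel scaleN1r. Qed.

Lemma DG_add y u v : DG y (u + v) = DG y u + DG y v.
Proof. have [A1 A2 A3 A4] := HG'; move: A1 A2 A3 A4 => L _ _ _; by rewrite -[u]scale1r L !scale1r. Qed.
Lemma DG_0 y : DG y 0 = 0.
Proof. have E := DG_add y 0 0; rewrite addr0 in E. by apply: (addrI (DG y 0)); rewrite addr0 -E. Qed.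
Lemma DG_scale y a u : DG y (a *: u) = a *: DG y u.
Proof. have [A1 A2 A3 A4] := HG'; move: A1 A2 A3 A4 => L _ _ _; by rewrite -[a *: u]addr0 L DG_0 addr0. Qed.

Lemma G_step y d : G (y + d) = G y + DG y d + 2^-1 *: D2G d d.
Proof. have [A1 A2 A3 A4] := HG'; move: A1 A2 A3 A4 => _ _ _ Q; by rewrite (Q y) (addrC y d) addrK. Qed.

Lemma DG_shift y0 y1 v : DG y1 v = DG y0 v + D2G (y1 - y0) v.
Proof.
case: HG' => _ _ _ Q.
have := Q y0 (y1 + v); rewrite G_step (Q y0 y1).
set d := y1 - y0.
have -> : y1 + v - y0 = d + v by rewrite /d addrAC.
rewrite DG_add (D2G_addl d v) (D2G_addr d v d) (D2G_addr d v v) (D2G_sym v d) !scalerDr.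
have hh : D2G d v = 2^-1 *: D2G d v + 2^-1 *: D2G d v.
  rewrite -scalerDl; have -> : (2^-1 + 2^-1 : K) = 1 by field.
  by rewrite scale1r.
rewrite !addrA => /addIr.
rewrite -!addrA => /addrI /addrI.
move=> E; rewrite [RHS]addrCA in E; move/addrI: E => ->.
by rewrite -hh.
Qed.
End Quad.

Arguments D2G_addl {K Z W G DG D2G} HG.
Arguments D2G_addr {K Z W G DG D2G} HG.
Arguments D2G_scalel {K Z W G DG D2G} HG.
Arguments D2G_scaler {K Z W G DG D2G} HG.
Arguments D2G_subl {K Z W G DG D2G} HG.
Arguments D2G_sym {K Z W G DG D2G} HG.
Arguments DG_add {K Z W G DG D2G} HG.
Arguments DG_scale {K Z W G DG D2G} HG.
Arguments G_step {K Z W G DG D2G} HG.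
Arguments DG_shift {K Z W G DG D2G} HG.

Lemma sum_split {V : zmodType} {s k} (Hk : (k < s)%N) (F : 'I_s -> V) :
  \sum_(j < s | (j < k.+1)%N) F j = \sum_(j < s | (j < k)%N) F j + F (Ordinal Hk).
Proof.
rewrite (bigD1 (Ordinal Hk)) //= addrC; congr (_ + _); apply: eq_bigl => j.
by rewrite -val_eqE /= ltnS; case: ltngtP.
Qed.

Theorem theorem2p10 (K : numFieldType) (Y Z W : vectType K)
    (f : Y -> Y) (F : Y -> Z) (DF D2F : Y -> Y -> Z)
    (g gamma : Z -> Z)
    (HF : is_quadratic F DF D2F)
    (Hg : forall y, DF y (f y) = g (F y))
    (Hgamma : forall y, D2F (f y) (f y) = gamma (F y))
    (s : nat) (b : 'I_s -> K) (Hb : forall i, b i != 0)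
    (h : K) (Hh : 0 < h)
    (z0 z1 : Z) (Zs : 'I_s -> Z)
    (HZ : forall i : 'I_s,
        Zs i = z0 + h *: (\sum_(j < s | (j < i)%N) b j *: g (Zs j))
               + (h / 2 * b i) *: g (Zs i)
               - (h ^+ 2 / 8 * b i ^+ 2) *: gamma (Zs i))
    (Hz1 : z1 = z0 + h *: (\sum_(i < s) b i *: g (Zs i)))
    (G : Z -> W) (DG D2G : Z -> Z -> W)
    (HG : is_quadratic G DG D2G) :
  G z1 = G z0 + h *: (\sum_(i < s) b i *: DG (Zs i) (g (Zs i)))
         + (h ^+ 3 / 8) *: (\sum_(i < s) b i ^+ 3 *: D2G (g (Zs i)) (gamma (Zs i))).
Proof.
have key : forall k, (k <= s)%N ->
  G (z0 + h *: \sum_(j < s | (j < k)%N) b j *: g (Zs j)) = G z0 +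
   \sum_(i < s | (i < k)%N) (h *: (b i *: DG (Zs i) (g (Zs i))) +
       (h ^+ 3 / 8) *: (b i ^+ 3 *: D2G (g (Zs i)) (gamma (Zs i)))).
  elim=> [_|k IH Hk].
    by rewrite !big_pred0 // scaler0 !addr0.
  rewrite !(sum_split Hk) scalerDr addrA.
 rewrite (G_step HG).
  set i := Ordinal Hk.
  set y := z0 + _.
  rewrite IH; last exact: ltnW.
  rewrite -!addrA; congr (_ + _); congr (_ + _).
  have eZ : Zs i - y = (h / 2 * b i) *: g (Zs i) - (h ^+ 2 / 8 * b i ^+ 2) *: gamma (Zs i).
    by rewrite {1}(HZ i) -/y addrAC (addrC y) addrK.
  rewrite (DG_shift HG y (Zs i)) eZ.
  move: (g (Zs i)) (gamma (Zs i)) (b i) => u w c.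
  rewrite !(DG_scale HG) (D2G_subl HG) !(D2G_scalel HG) !(D2G_scaler HG) (D2G_sym HG u w).
  move: (DG y u) (D2G u u) (D2G w u) => A B C.
  rewrite !scalerA !scalerDr scalerN !scalerA.
  have -> : 2^-1 * (h * c * h * c) = h * c * (h / 2 * c) by field.
  have -> : h * c * (h ^+ 2 / 8 * c ^+ 2) = h ^+ 3 / 8 * c ^+ 3 by field.
  by rewrite -(addrA ((h * c) *: A)) subrK.
have E1 : forall (V : zmodType) (F0 : 'I_s -> V),
    \sum_(j < s | (j < s)%N) F0 j = \sum_(j < s) F0 j.
  by move=> V F0; apply: eq_bigl => j; exact: ltn_ord.
by rewrite Hz1 -E1 key // E1 big_split /= -!scaler_sumr addrA.
Qed.
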